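(* Let $\mathcal{E}=(\mathbf{R},\mathbf{S},\Sigma_{st},\mathbf{F})$ be a consistent constructive relational to RDF data exchange setting, $I$ a consistent instance of $\mathbf{R}$, $E$ a forward nested regular expression, and $\mathcal{U}$ a universal simulation solution for $I$ w.r.t. $\mathcal{E}$. A pair $(n,m)$ is a certain answer to $E$ in $I$ w.r.t. $\mathcal{E}$ if and only if $(n,m)\in[\![E]\!]_{\mathcal{U}}$ and neither $n$ nor $m$ is a null value.
   Context: Values: $\mathsf{Iri}$ (IRIs, containing predicates $\mathsf{Pred}$), $\mathsf{NullIri}$, $\mathsf{Lit}$ with null literals $\mathsf{NullLit}\subseteq\mathsf{Lit}$; null values are those in $\mathsf{NullLit}\cup\mathsf{NullIri}$. $\mathbf{R}=(\mathcal{R},\Sigma_{fd})$: relation names with arities and functional dependencies; an instance assigns finite sets of tuples of non-null literals; consistent instances satisfy $\Sigma_{fd}$. Typed graph: finite set of triples $(s,p,o)$, $s\in\mathsf{Iri}\cup\mathsf{NullIri}$, $p\in\mathsf{Pred}$, $o\in\mathsf{Iri}\cup\mathsf{NullIri}\cup\mathsf{Lit}$, with type facts $T(n)$ ($T\in\mathcal{T}$), $\mathit{Literal}(n)$. Deterministic shape schema $\mathbf{S}=(\mathcal{T},\delta)$: partial $\delta:\mathcal{T}\times\mathsf{Pred}\to(\mathcal{T}\cup\{\mathit{Literal}\})\times\{1,?,*,+\}$; satisfaction: for each $\delta(T,p)=S^\mu$, $p$-successors of $T$-typed nodes have type $S$, at most one if $\mu\in\{1,?\}$, at least one if $\mu\in\{1,+\}$.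 Constructive setting: IRI constructors $f\in\mathcal{F}$ interpreted as $f^F:\mathsf{Lit}^n\to\mathsf{Iri}$ (constants) with pairwise disjoint ranges; full st-tgds $\forall\bar x.\,\varphi\Rightarrow\psi$, $\varphi$ over $\mathcal{R}$, $\psi$ a conjunction of atoms $\mathit{Triple}(t_1,p,t_2)$, $T(t)$, $\mathit{Literal}(t)$, terms variables or $f(\bar u)$. Solution for $I$: typed graph satisfying $\mathbf{S}$ and, together with $I$, $\Sigma_{st}$; $\mathcal{E}$ consistent if each consistent instance has one. Simulation: relation $R$ between nodes of $G$ and $H$ such that for $(n,m)\in R$: $n$ literal iff $m$ literal; if $n$ non-null then $n=m$; each edge $(n,p,n')\in G$ matched by some $(m,p,m')\in H$ with $(n',m')\in R$; $G$ simulated by $H$ if every node of $G$ is related to some node of $H$. A universal simulation solution for $I$: a solution simulated by every solution for $I$. Forward NREs: $E::=\epsilon\mid p\mid\Box\mid\langle\ell\rangle\mid[E]\mid E^*\mid E\cdot E\mid E+E$ with semantics: identity on nodes, $p$-edges, all edges, $\{(\ell,\ell)\}$ if $\ell$ is a node, $\{(n,n)\mid\exists m.(n,m)\in[\![E]\!]_G\}$, union, composition, reflexive-transitive closure. $(n,m)$ is a certain answer to $E$ in $I$ w.r.t. $\mathcal{E}$ iff $(n,m)\in[\![E]\!]_J$ for every solution $J$ for $I$. *)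

(* Defs.v *)
From Stdlib Require Import List Relations.
Import ListNotations.
Set Implicit Arguments.

(* Iri (with the subset Pred given by isPred), NullIri, Lit (with the subset
   NullLit given by isNullLit). The three carriers are disjoint by
   construction of [node] below. *)
Record Univ := mkUniv {
  Iri : Type;
  NullIri : Type;
  Lit : Type;
  isPred : Iri -> Prop;
  isNullLit : Lit -> Prop }.

(* Standard assumption: there are infinitely many null IRIs and null literals. *)
Definition univ_ok (V : Univ) : Prop :=
  (forall l : list (NullIri V), exists x, ~ In x l) /\
  (forall l : list (Lit V), exists x, isNullLit V x /\ ~ In x l).

Section DataExchange.
Variable V : Univ.

Inductive node : Type :=
| NIri (i : Iri V)
| NNull (k : NullIri V)
| NLit (l : Lit V).

Definition is_null (n : node) : Prop :=
  match n with NNull _ => True | NLit l => isNullLit V l | NIri _ => False end.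

Definition is_literal (n : node) : Prop :=
  match n with NLit _ => True | _ => False end.

Record rel_schema := {
  Rn : Type;
  rarity : Rn -> nat;
  rnames : list Rn;
  rnames_all : forall r, In r rnames;
  fds : list (Rn * list nat * list nat) (* r : X -> Y, positions 0..arity-1 *)
}.

Definition rel_schema_wf (RS : rel_schema) : Prop :=
  forall r X Y, In (r, X, Y) (fds RS) ->
    (forall i, In i X -> i < rarity RS r) /\ (forall j, In j Y -> j < rarity RS r).

Definition instance (RS : rel_schema) := Rn RS -> list (list (Lit V)).

Definition instance_wf (RS : rel_schema) (I : instance RS) : Prop :=
  forall r t, In t (I r) ->
    length t = rarity RS r /\ (forall l, In l t -> ~ isNullLit V l).

Definition fd_sat (RS : rel_schema) (I : instance RS) : Prop :=
  forall r X Y, In (r, X, Y) (fds RS) ->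
    forall t1 t2, In t1 (I r) -> In t2 (I r) ->
      (forall i, In i X -> nth_error t1 i = nth_error t2 i) ->
      (forall j, In j Y -> nth_error t1 j = nth_error t2 j).

Inductive mult := M1 | MOpt | MStar | MPlus.

Inductive stype (Tn : Type) := STy (T : Tn) | SLiteral.

Record shape_schema := {
  Tn : Type;
  tnames : list Tn;
  tnames_all : forall T, In T tnames;
  delta : Tn -> Iri V -> option (stype Tn * mult)
}.

Definition shape_schema_wf (S : shape_schema) : Prop :=
  forall T p st, delta S T p = Some st -> isPred V p.

Record tgraph (Tn : Type) := {
  triples : list (node * Iri V * node);
  tfacts : list (Tn * node);
  lfacts : list node
}.

Definition tgraph_wf (Tn : Type) (G : tgraph Tn) : Prop :=
  forall s p o, In (s, p, o) (triples G) ->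
    (match s with NLit _ => False | _ => True end) /\ isPred V p.

Definition has_type (Tn : Type) (G : tgraph Tn) (S : stype Tn) (n : node) : Prop :=
  match S with
  | STy T => In (T, n) (tfacts G)
  | SLiteral _ => In n (lfacts G)
  end.

Definition satisfies (S : shape_schema) (G : tgraph (Tn S)) : Prop :=
  forall T p St mu, delta S T p = Some (St, mu) ->
  forall n, In (T, n) (tfacts G) ->
    (forall o, In (n, p, o) (triples G) -> has_type G St o) /\
    ((mu = M1 \/ mu = MOpt) ->
       forall o1 o2, In (n, p, o1) (triples G) -> In (n, p, o2) (triples G) -> o1 = o2) /\
    ((mu = M1 \/ mu = MPlus) -> exists o, In (n, p, o) (triples G)).

Record constructors := {
  Fn : Type;
  farity : Fn -> nat;
  finterp : Fn -> list (Lit V) -> Iri V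
}.

Definition constructors_wf (F : constructors) : Prop :=
  forall f g u v, f <> g -> length u = farity F f -> length v = farity F g ->
    finterp F f u <> finterp F g v.

Inductive hterm (Fn : Type) := HVar (x : nat) | HFun (f : Fn) (xs : list nat).

Inductive hatom (Fn Tn : Type) :=
| HTriple (t1 : hterm Fn) (p : Iri V) (t2 : hterm Fn)
| HType (T : Tn) (t : hterm Fn)
| HLiteral (t : hterm Fn).

Record tgd (Rn Fn Tn : Type) := {
  body : list (Rn * list nat);
  head : list (hatom Fn Tn)
}.

Definition hterm_vars (Fn : Type) (t : hterm Fn) : list nat :=
  match t with HVar _ x => [x] | HFun f xs => xs end.

Definition hatom_terms (Fn Tn : Type) (a : hatom Fn Tn) : list (hterm Fn) :=
  match a with
  | HTriple _ t1 _ t2 => [t1; t2]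
  | HType _ t => [t]
  | HLiteral _ t => [t]
  end.

Record setting := {
  RS : rel_schema;
  SS : shape_schema;
  FF : constructors;
  tgds : list (tgd (Rn RS) (Fn FF) (Tn SS))
}.

Definition tgd_wf (E : setting) (d : tgd (Rn (RS E)) (Fn (FF E)) (Tn (SS E))) : Prop :=
  (forall r xs, In (r, xs) (body d) -> length xs = rarity (RS E) r) /\
  (forall a, In a (head d) ->
     (match a with HTriple _ _ p _ => isPred V p | _ => True end) /\
     forall t, In t (hatom_terms a) ->
       (match t with HFun f xs => length xs = farity (FF E) f | _ => True end) /\
       forall x, In x (hterm_vars t) -> exists r xs, In (r, xs) (body d) /\ In x xs).

Definition setting_wf (E : setting) : Prop :=
  rel_schema_wf (RS E) /\ shape_schema_wf (SS E) /\ constructors_wf (FF E) /\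
  forall d, In d (tgds E) -> tgd_wf E d.

Definition eval_hterm (E : setting) (val : nat -> Lit V) (t : hterm (Fn (FF E))) : node :=
  match t with
  | HVar _ x => NLit (val x)
  | HFun f xs => NIri (finterp (FF E) f (map val xs))
  end.

Definition hatom_holds (E : setting) (G : tgraph (Tn (SS E))) (val : nat -> Lit V)
  (a : hatom (Fn (FF E)) (Tn (SS E))) : Prop :=
  match a with
  | HTriple _ t1 p t2 => In (eval_hterm E val t1, p, eval_hterm E val t2) (triples G)
  | HType T t => In (T, eval_hterm E val t) (tfacts G)
  | HLiteral _ t => In (eval_hterm E val t) (lfacts G)
  end.

Definition tgd_sat (E : setting) (I : instance (RS E)) (G : tgraph (Tn (SS E)))
  (d : tgd (Rn (RS E)) (Fn (FF E)) (Tn (SS E))) : Prop :=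
  forall val : nat -> Lit V,
    (forall r xs, In (r, xs) (body d) -> In (map val xs) (I r)) ->
    forall a, In a (head d) -> hatom_holds E G val a.

Definition consistent_instance (E : setting) (I : instance (RS E)) : Prop :=
  instance_wf I /\ fd_sat I.

Definition solution (E : setting) (I : instance (RS E)) (G : tgraph (Tn (SS E))) : Prop :=
  tgraph_wf G /\ @satisfies (SS E) G /\ forall d, In d (tgds E) -> @tgd_sat E I G d.

Definition setting_consistent (E : setting) : Prop :=
  forall I : instance (RS E), @consistent_instance E I -> exists G, @solution E I G.

Definition node_of (Tn : Type) (G : tgraph Tn) (n : node) : Prop :=
  (exists p o, In (n, p, o) (triples G)) \/ (exists s p, In (s, p, n) (triples G)) \/
  (exists T, In (T, n) (tfacts G)) \/ In n (lfacts G).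

Definition simulation (Tn : Type) (G H : tgraph Tn) (R : node -> node -> Prop) : Prop :=
  forall n m, R n m ->
    node_of G n /\ node_of H m /\
    (is_literal n <-> is_literal m) /\
    (~ is_null n -> n = m) /\
    (forall p n', In (n, p, n') (triples G) ->
       exists m', In (m, p, m') (triples H) /\ R n' m').

Definition simulated (Tn : Type) (G H : tgraph Tn) : Prop :=
  exists R, simulation G H R /\ forall n, node_of G n -> exists m, R n m.

Definition universal_sim_solution (E : setting) (I : instance (RS E))
  (U : tgraph (Tn (SS E))) : Prop :=
  @solution E I U /\ forall J, @solution E I J -> simulated U J.

Inductive nre :=
| NEps
| NPred (p : Iri V)
| NBox
| NTest (l : node)
| NNest (e : nre)
| NStar (e : nre)
| NConcat (e1 e2 : nre)
| NUnion (e1 e2 : nre).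

Fixpoint nre_sem (Tn : Type) (G : tgraph Tn) (e : nre) : node -> node -> Prop :=
  match e with
  | NEps => fun n m => node_of G n /\ n = m
  | NPred p => fun n m => In (n, p, m) (triples G)
  | NBox => fun n m => exists p, In (n, p, m) (triples G)
  | NTest l => fun n m => n = l /\ m = l /\ node_of G l
  | NNest e1 => fun n m => n = m /\ exists k, nre_sem G e1 n k
  | NStar e1 => fun n m => (node_of G n /\ n = m) \/ clos_trans node (nre_sem G e1) n m
  | NConcat e1 e2 => fun n m => exists k, nre_sem G e1 n k /\ nre_sem G e2 k m
  | NUnion e1 e2 => fun n m => nre_sem G e1 n m \/ nre_sem G e2 n m
  end.

Fixpoint nre_const_tests (e : nre) : Prop :=
  match e with
  | NEps | NPred _ | NBox => True
  | NTest l => ~ is_null l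
  | NNest e1 | NStar e1 => nre_const_tests e1
  | NConcat e1 e2 | NUnion e1 e2 => nre_const_tests e1 /\ nre_const_tests e2
  end.

Definition certain_answer (E : setting) (I : instance (RS E)) (e : nre) (n m : node) : Prop :=
  forall J, @solution E I J -> nre_sem J e n m.

End DataExchange.

Arguments consistent_instance {V E} I.
Arguments solution {V E} I G.
Arguments tgd_sat {V E} I G d.
Arguments universal_sim_solution {V E} I U.
Arguments certain_answer {V E} I e n m.
Arguments setting_consistent {V} E.
Arguments setting_wf {V} E.

(* Main.v *)
Require Import Defs.
From Stdlib Require Import List Relations ClassicalDescription.
Import ListNotations.
Set Implicit Arguments.

Section Proofs.
Variable V : Univ.

Lemma sem_nodes (Tn : Type) (G : tgraph V Tn) (e : nre V) :
  forall a b, nre_sem G e a b -> node_of G a /\ node_of G b.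
Proof.
  induction e; simpl; intros a b H.
  - destruct H as [H1 H2]; subst; auto.
  - split; [left; eauto | right; left; eauto].
  - destruct H as [p Hp]; split; [left; eauto | right; left; eauto].
  - destruct H as [-> [-> H]]; auto.
  - destruct H as [-> [k Hk]]. destruct (IHe _ _ Hk); auto.
  - destruct H as [[H1 H2]|H]; [subst; auto|].
    induction H as [x y Hxy| x y z _ [IH1 _] _ [_ IH2]]; auto.
  - destruct H as [k [H1 H2]]. destruct (IHe1 _ _ H1); destruct (IHe2 _ _ H2); auto.
  - destruct H as [H|H]; [apply IHe1|apply IHe2]; auto.
Qed.

Lemma sim_sem (Tn : Type) (G H : tgraph V Tn) (R : node V -> node V -> Prop)
  (e : nre V) : simulation G H R -> nre_const_tests e ->
  forall a b a', nre_sem G e a b -> R a a' -> exists b', nre_sem H e a' b' /\ R b b'.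
Proof.
  intros HS. induction e; simpl; intros Hc a b a' Hab Ra.
  - destruct Hab as [_ ->]. exists a'. destruct (HS _ _ Ra) as [_ [Ha' _]]. auto.
  - destruct (HS _ _ Ra) as [_ [_ [_ [_ Hs]]]]. destruct (Hs _ _ Hab) as [m' [? ?]]; eauto.
  - destruct Hab as [p Hp].
    destruct (HS _ _ Ra) as [_ [_ [_ [_ Hs]]]]. destruct (Hs _ _ Hp) as [m' [? ?]]; eauto.
  - destruct Hab as [-> [-> Hl]].
    destruct (HS _ _ Ra) as [_ [Ha' [_ [Hn _]]]]. specialize (Hn Hc). subst. eauto.
  - destruct Hab as [-> [k Hk]]. destruct (IHe Hc _ _ _ Hk Ra) as [k' [? ?]].
    exists a'; eauto.
  - destruct Hab as [[_ ->]|Ht].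
    + exists a'. destruct (HS _ _ Ra) as [_ [Ha' _]]. auto.
    + revert a' Ra. induction Ht as [x y Hxy | x y z _ IH1 _ IH2]; intros a' Ra.
      * destruct (IHe Hc _ _ _ Hxy Ra) as [b' [? ?]]. exists b'. split; auto.
        right. apply t_step; auto.
      * destruct (IH1 _ Ra) as [y' [Hy1 Ry]]. destruct (IH2 _ Ry) as [z' [Hz1 Rz]].
        exists z'. split; auto.
        destruct Hy1 as [[_ <-]|Hy1]; auto.
        destruct Hz1 as [[_ <-]|Hz1]; auto.
        right. eapply t_trans; eauto.
  - destruct Hc as [Hc1 Hc2]. destruct Hab as [k [H1 H2]].
    destruct (IHe1 Hc1 _ _ _ H1 Ra) as [k' [? Rk]].
    destruct (IHe2 Hc2 _ _ _ H2 Rk) as [b' [? ?]]. eauto.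
  - destruct Hc as [Hc1 Hc2]. destruct Hab as [H1|H1].
    + destruct (IHe1 Hc1 _ _ _ H1 Ra) as [b' [? ?]]; eauto.
    + destruct (IHe2 Hc2 _ _ _ H1 Ra) as [b' [? ?]]; eauto.
Qed.

Definition nodes_of (Tn : Type) (G : tgraph V Tn) : list (node V) :=
  map (fun t => fst (fst t)) (triples G) ++ map snd (triples G) ++
  map snd (tfacts G) ++ lfacts G.

Lemma node_of_in (Tn : Type) (G : tgraph V Tn) x : node_of G x -> In x (nodes_of G).
Proof.
  unfold nodes_of; intros [[p [o H]]|[[s [p H]]|[[T H]|H]]]; rewrite !in_app_iff.
  - left. apply in_map_iff. exists (x,p,o). auto.
  - right; left. apply in_map_iff. exists (s,p,x). auto.
  - right; right; left. apply in_map_iff. exists (T,x). auto.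
  - auto.
Qed.

Definition nulls_of (l : list (node V)) : list (NullIri V) :=
  flat_map (fun x => match x with NNull _ k => [k] | _ => [] end) l.
Definition lits_of (l : list (node V)) : list (Lit V) :=
  flat_map (fun x => match x with NLit _ k => [k] | _ => [] end) l.

Lemma fresh_node (L : list (node V)) (n : node V) : univ_ok V -> is_null n ->
  exists n', ~ In n' L /\ (is_literal n' <-> is_literal n).
Proof.
  intros [U1 U2] Hn. destruct n; simpl in Hn; try contradiction.
  - destruct (U1 (nulls_of L)) as [k' Hk]. exists (NNull V k'). simpl. split; [|tauto].
    intro H. apply Hk. unfold nulls_of. apply in_flat_map. exists (NNull V k'). simpl; auto.
  - destruct (U2 (lits_of L)) as [l' [_ Hk]]. exists (NLit V l'). simpl. split; [|tauto].
    intro H. apply Hk. unfold lits_of. apply in_flat_map. exists (NLit V l'). simpl; auto.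
Qed.

Section Rename.
Variable E : setting V.
Variable I : instance V (RS E).
Variable U : tgraph V (Tn (SS E)).
Variables n n' : node V.
Hypothesis Hnn : ~ In n' (n :: nodes_of U).
Hypothesis Hkind : is_literal n' <-> is_literal n.
Hypothesis Hnull : is_null n.

Definition sig (x : node V) : node V :=
  if excluded_middle_informative (x = n) then n' else x.

Definition J : tgraph V (Tn (SS E)) := {|
  triples := map (fun t => (sig (fst (fst t)), snd (fst t), sig (snd t))) (triples U);
  tfacts := map (fun t => (fst t, sig (snd t))) (tfacts U);
  lfacts := map sig (lfacts U) |}.

Lemma sig_inj x y : node_of U x -> node_of U y -> sig x = sig y -> x = y.
Proof.
  intros Px Py. unfold sig.
  destruct (excluded_middle_informative (x = n)); destruct (excluded_middle_informative (y = n));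
    intro H; subst; auto.
  - exfalso; apply Hnn; right; apply node_of_in; auto.
  - exfalso; apply Hnn; right; apply node_of_in; auto.
Qed.

Lemma sig_nonnull x : ~ is_null x -> sig x = x.
Proof.
  unfold sig. destruct (excluded_middle_informative (x = n)); auto. subst; tauto.
Qed.

Lemma J_not_n : ~ node_of J n.
Proof.
  assert (Hs : forall x, node_of U x -> sig x <> n).
  { intros x Px. unfold sig. destruct (excluded_middle_informative (x = n)).
    - intro H; subst. apply Hnn; left; auto.
    - auto. }
  intros [[p [o H]]|[[s [p H]]|[[T H]|H]]]; simpl in H; apply in_map_iff in H;
    destruct H as [[[a b] c] [Heq Hin]] || destruct H as [[a b] [Heq Hin]] ||
    destruct H as [a [Heq Hin]]; simpl in *.
  - injection Heq; intros; eapply Hs; [|eauto]. left; eauto.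
  - injection Heq; intros; eapply Hs; [|eauto]. right; left; eauto.
  - injection Heq; intros; eapply Hs; [|eauto]. right; right; left; eauto.
  - eapply Hs; [|eauto]. right; right; right; eauto.
Qed.

Lemma J_solution : setting_wf E -> consistent_instance I -> solution I U -> solution I J.
Proof.
  intros [_ [_ [_ Hwf]]] [HI _] [Hw [Hsat Htgd]]. split; [|split].
  - intros s p o H. simpl in H. apply in_map_iff in H.
    destruct H as [[[a b] c] [Heq Hin]]. simpl in Heq. injection Heq; intros; subst.
    destruct (Hw _ _ _ Hin) as [H1 H2]. split; auto.
    unfold sig. destruct (excluded_middle_informative (a = n)); auto. subst.
    destruct n'; auto. destruct n; simpl in *; tauto.
  - intros T p St mu Hd n0 Hn0. simpl in Hn0. apply in_map_iff in Hn0.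
    destruct Hn0 as [[T' x] [Heq Hin]]. simpl in Heq. injection Heq; intros; subst.
    destruct (Hsat _ _ _ _ Hd _ Hin) as [S1 [S2 S3]].
    assert (Px : node_of U x) by (right; right; left; eauto).
    assert (Htr : forall o, In (sig x, p, o) (triples J) ->
               exists o', o = sig o' /\ In (x, p, o') (triples U)).
    { intros o Ho. simpl in Ho. apply in_map_iff in Ho.
      destruct Ho as [[[a b] c] [Heq2 Hin2]]. simpl in Heq2. injection Heq2; intros; subst.
      exists c. split; auto. apply sig_inj in H1; [subst; auto | left; eauto | auto]. }
    split; [|split].
    + intros o Ho. destruct (Htr _ Ho) as [o' [-> Ho']]. specialize (S1 _ Ho').
      destruct St; simpl in *; apply in_map_iff.
      * exists (T0, o'); auto.
      * exists o'; auto.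
    + intros Hm o1 o2 H1 H2. destruct (Htr _ H1) as [o1' [-> H1']].
      destruct (Htr _ H2) as [o2' [-> H2']]. rewrite (S2 Hm _ _ H1' H2'). auto.
    + intros Hm. destruct (S3 Hm) as [o Ho]. exists (sig o). simpl. apply in_map_iff.
      exists (x, p, o). auto.
  - intros d Hd val Hb a Ha. specialize (Htgd d Hd val Hb a Ha).
    destruct (Hwf d Hd) as [_ Hh]. destruct (Hh a Ha) as [_ Ht].
    assert (Hev : forall t, In t (hatom_terms a) -> sig (eval_hterm E val t) = eval_hterm E val t).
    { intros t Hti. apply sig_nonnull. destruct (Ht t Hti) as [_ Hv].
      destruct t as [x|f xs]; simpl; auto.
      destruct (Hv x (or_introl eq_refl)) as [r [xs [Hr Hx]]].
      specialize (Hb _ _ Hr). destruct (HI _ _ Hb) as [_ Hl]. apply Hl.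
      apply in_map; auto. }
    destruct a as [t1 p t2|T t|t]; simpl in *.
    + rewrite <- (Hev t1), <- (Hev t2) by auto. apply in_map_iff.
      exists (eval_hterm E val t1, p, eval_hterm E val t2). auto.
    + rewrite <- (Hev t) by auto. apply in_map_iff. exists (T, eval_hterm E val t). auto.
    + rewrite <- (Hev t) by auto. apply in_map_iff. exists (eval_hterm E val t). auto.
Qed.
End Rename.

Lemma avoid (E : setting V) (I : instance V (RS E)) (U : tgraph V (Tn (SS E))) x :
  univ_ok V -> setting_wf E -> consistent_instance I -> solution I U -> is_null x ->
  exists J, solution I J /\ ~ node_of J x.
Proof.
  intros Hu Hw Hc Hs Hx. destruct (@fresh_node (x :: nodes_of U) x Hu Hx) as [x' [H1 H2]].
  exists (J E U x x'). split.
  - apply J_solution; auto.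
  - apply J_not_n; auto.
Qed.

End Proofs.

Theorem proposition4 (V : Univ) (E : setting V) (I : instance V (RS E))
  (e : nre V) (U : tgraph V (Tn (SS E))) (n m : node V) :
  univ_ok V ->
  setting_wf E ->
  setting_consistent E ->
  consistent_instance I ->
  nre_const_tests e ->
  universal_sim_solution I U ->
  (certain_answer I e n m <-> (nre_sem U e n m /\ ~ is_null n /\ ~ is_null m)).
Proof.
  intros Hu Hw _ Hc He [HU Huniv]. split.
  - intros Hca. assert (HsU := Hca U HU). split; [auto|split].
    + intro Hn. destruct (@avoid V E I U _ Hu Hw Hc HU Hn) as [J [HJ HnJ]].
      apply HnJ. apply (@sem_nodes V _ J e n m (Hca J HJ)).
    + intro Hn. destruct (@avoid V E I U _ Hu Hw Hc HU Hn) as [J [HJ HnJ]].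
      apply HnJ. apply (@sem_nodes V _ J e n m (Hca J HJ)).
  - intros [Hs [Hn Hm]] J HJ. destruct (Huniv J HJ) as [R [HR Htot]].
    destruct (Htot n (proj1 (@sem_nodes V _ U e n m Hs))) as [n' Rn].
    destruct (HR _ _ Rn) as [_ [_ [_ [Heq _]]]]. rewrite <- (Heq Hn) in Rn.
    destruct (@sim_sem V _ U J R e HR He n m n Hs Rn) as [b' [Hb Rb]].
    destruct (HR _ _ Rb) as [_ [_ [_ [Heq2 _]]]]. rewrite <- (Heq2 Hm) in Hb. exact Hb.
Qed.
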